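(* Let $n\ge 3$ and let $C_n$ be the cycle on vertex set $[n]$ with edges $\{i,i+1\}$ for $1\le i\le n-1$ and $\{1,n\}$ (the standard labeling). Then for every positive integer $t$, the independence complex $\Delta(C_n)$ is $t$-sortable with respect to this labeling, i.e. for all independent sets $A,B$ of $C_n$ with $|A|=|B|=t$, both components of $\mathrm{sort}(A,B)$ are independent sets of $C_n$.
   Context: The independence complex $\Delta(G)$ is the simplicial complex of independent sets of $G$. For finite $F,G\subset\mathbb{N}$ with $|F|=r,|G|=s$, write $\mathbf{x}^F\mathbf{x}^G=x_{i_1}\cdots x_{i_{r+s}}$ with $i_1\le\cdots\le i_{r+s}$ (where $\mathbf{x}^F=\prod_{i\in F}x_i$) and set $\mathrm{sort}(F,G)=(\{i_k:k\text{ odd}\},\{i_k:k\text{ even}\})$. A simplicial complex $\Delta$ with $V(\Delta)\subset\mathbb{N}$ is $t$-sortable with respect to the given labeling if $\mathrm{sort}(F,G)\in\Delta\times\Delta$ for all $F,G\in\Delta$ with $|F|=|G|=t$. *)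

(* Defs.v *)
From mathcomp Require Import all_boot.
Set Implicit Arguments. Unset Strict Implicit. Unset Printing Implicit Defensive.

(* Finite subsets of N are represented by duplicate-free sequences of nat. *)

Definition cycle_edge (n i j : nat) : bool :=
  [&& 1 <= i <= n, 1 <= j <= n &
      [|| j == i.+1, i == j.+1, (i == 1) && (j == n) | (i == n) && (j == 1)]].

Definition independent (V : pred nat) (e : rel nat) (A : seq nat) : bool :=
  [&& uniq A, all V A & all (fun i => all (fun j => ~~ e i j) A) A].

Definition cycle_vertices (n : nat) : pred nat := fun i => 1 <= i <= n.

Definition indep_cycle (n : nat) (A : seq nat) : bool :=
  independent (cycle_vertices n) (cycle_edge n) A.

(* sort(F,G): write x^F x^G = x_{i_1}...x_{i_{r+s}} with i_1 <= ... <= i_{r+s};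
   first component collects i_k with k odd, second with k even (1-based k). *)
Definition odd_pos (s : seq nat) : seq nat :=
  [seq nth 0 s k | k <- iota 0 (size s) & ~~ odd k].
Definition even_pos (s : seq nat) : seq nat :=
  [seq nth 0 s k | k <- iota 0 (size s) & odd k].

Definition sort_pair (F G : seq nat) : seq nat * seq nat :=
  let s := sort leq (F ++ G) in (odd_pos s, even_pos s).

Definition t_sortable (Delta : seq nat -> bool) (t : nat) : Prop :=
  forall F G : seq nat, Delta F -> Delta G -> size F = t -> size G = t ->
    Delta (sort_pair F G).1 /\ Delta (sort_pair F G).2.

(* Main.v *)
Require Import Defs.
From mathcomp Require Import all_boot.
From mathcomp Require Import zify.
Set Implicit Arguments. Unset Strict Implicit. Unset Printing Implicit Defensive.

Lemma cnt_le1 (F : seq nat) (u v : nat) : uniq F -> ~~ ((u \in F) && (v \in F)) ->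
  @count nat (fun y : nat => (y == u) || (y == v)) F <= 1.
Proof.
move=> uF nuv.
have := count_predUI (pred1 u) (pred1 v) F.
have -> : count (predU (pred1 u) (pred1 v)) F = @count nat (fun y : nat => (y == u) || (y == v)) F by [].
rewrite -/(count_mem u F) -/(count_mem v F) !count_uniq_mem //.
move: nuv; case: (u \in F); case: (v \in F) => //= _; lia.
Qed.

Lemma cnt3 (a : pred nat) (s : seq nat) p q r :
  p < q -> q < r -> r < size s -> a (nth 0 s p) -> a (nth 0 s q) -> a (nth 0 s r) ->
  3 <= count a s.
Proof.
move=> pq qr rs ap aq ar.
have qs : q < size s by lia.
rewrite -(cat_take_drop q s) count_cat (drop_nth 0 qs) /= aq.
have h1 : 0 < count a (take q s).
  rewrite -has_count; apply/hasP; exists (nth 0 s p) => //.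
  have hp : p < size (take q s) by rewrite size_take qs.
  rewrite -(nth_take 0 pq); exact: mem_nth hp.
have h2 : 0 < count a (drop q.+1 s).
  rewrite -has_count; apply/hasP; exists (nth 0 s r) => //.
  have -> : r = q.+1 + (r - q.+1) by lia.
  have hr : r - q.+1 < size (drop q.+1 s) by rewrite size_drop; lia.
  rewrite -nth_drop; exact: mem_nth hr.
lia.
Qed.

Section Main.
Variables (n t : nat) (F G : seq nat).
Hypothesis n3 : 3 <= n.
Hypothesis iF : indep_cycle n F.
Hypothesis iG : indep_cycle n G.
Hypothesis sF : size F = t.
Hypothesis sG : size G = t.

Let s := sort leq (F ++ G).

Lemma s_sorted : sorted leq s.
Proof. apply: sort_sorted; exact: leq_total. Qed.

Lemma s_perm : perm_eq s (F ++ G).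
Proof. by rewrite /s perm_sort. Qed.

Lemma s_size : size s = 2 * t.
Proof. rewrite (perm_size s_perm) size_cat sF sG; lia. Qed.

Lemma s_cnt a : count a s = count a F + count a G.
Proof. by rewrite (permP s_perm) count_cat. Qed.

Lemma s_V (x : nat) : x \in s -> 1 <= x <= n.
Proof.
rewrite (perm_mem s_perm) mem_cat => /orP [] hx.
  by move: iF => /and3P [_ /allP /(_ x hx) h _].
by move: iG => /and3P [_ /allP /(_ x hx) h _].
Qed.

Lemma s_nthV i : i < size s -> 1 <= nth 0 s i <= n.
Proof. by move=> hi; apply: s_V; apply: mem_nth. Qed.

Lemma s_mono i j : i <= j -> j < size s -> nth 0 s i <= nth 0 s j.
Proof.
move=> ij js; apply: (sorted_leq_nth leq_trans leqnn 0 s_sorted) => //.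
rewrite inE; lia.
Qed.

Lemma indep_no_edge (A : seq nat) (x y : nat) : indep_cycle n A -> x \in A -> y \in A ->
  ~~ cycle_edge n x y.
Proof.
by move=> /and3P [_ _ /allP h] hx hy; move: (h x hx) => /allP /(_ y hy).
Qed.

Lemma indep_V (A : seq nat) (x : nat) : indep_cycle n A -> x \in A -> 1 <= x <= n.
Proof. by move=> /and3P [_ /allP h _] /h. Qed.

Lemma cnt_pair_adj (A : seq nat) (x : nat) : indep_cycle n A ->
  @count nat (fun y : nat => (y == x) || (y == x.+1)) A <= 1.
Proof.
move=> iA; apply: cnt_le1; first by case/and3P: iA.
apply/negP => /andP [h1 h2].
move: (indep_no_edge iA h1 h2) (indep_V iA h1) (indep_V iA h2).
rewrite /cycle_edge eqxx /= => /negP H a b; apply: H; by rewrite a b.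
Qed.

Lemma cnt_pair_wrap (A : seq nat) : indep_cycle n A ->
  @count nat (fun y : nat => (y == 1) || (y == n)) A <= 1.
Proof.
move=> iA; apply: cnt_le1; first by case/and3P: iA.
apply/negP => /andP [h1 h2].
move: (indep_no_edge iA h1 h2).
rewrite /cycle_edge !eqxx /= !orbT andbT leqnn => /negP; apply.
have -> : 0 < n by lia.
done.
Qed.

Lemma gap i : i.+2 < size s -> nth 0 s i + 2 <= nth 0 s i.+2.
Proof.
move=> hi; rewrite leqNgt; apply/negP => hc.
set x := nth 0 s i.
have := cnt3 (a := fun y => (y == x) || (y == x.+1)) (ltnSn i) (ltnSn i.+1) hi.
have m1 := s_mono (leqnSn i) (ltnW hi).
have m2 := s_mono (leqnSn i.+1) hi.
rewrite /= eqxx /=.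
have -> : (nth 0 s i.+1 == x) || (nth 0 s i.+1 == x.+1).
  rewrite -/x in m1; apply/orP; case: (ltngtP (nth 0 s i.+1) x); lia.
have -> : (nth 0 s i.+2 == x) || (nth 0 s i.+2 == x.+1).
  rewrite -/x in m1; apply/orP; case: (ltngtP (nth 0 s i.+2) x); lia.
move=> /(_ isT).
rewrite s_cnt.
have := cnt_pair_adj x iF; have := cnt_pair_adj x iG; lia.
Qed.

Lemma gap2 i j : i < j -> odd i = odd j -> j < size s -> nth 0 s i + 2 <= nth 0 s j.
Proof.
move=> ij pij js.
have hj : i.+2 <= j.
  case: (ltngtP j i.+1) => [|//|e]; first lia.
  by move: pij; rewrite e /=; case: (odd i).
apply: leq_trans (gap _) (s_mono hj js); lia.
Qed.

Lemma wrap i j b : i < j -> odd i = b -> odd j = b -> j < size s ->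
  nth 0 s i = 1 -> nth 0 s j = n -> False.
Proof.
move=> ij pi pj js hi hj.
have hc := cnt_pair_wrap iF; have hd := cnt_pair_wrap iG.
have ok : forall p q r, p < q -> q < r -> r < size s ->
  nth 0 s p = 1 \/ nth 0 s p = n -> nth 0 s q = 1 \/ nth 0 s q = n ->
  nth 0 s r = 1 \/ nth 0 s r = n -> False.
  move=> p q r pq qr rs ap aq ar.
  have := cnt3 (a := fun y => (y == 1) || (y == n)) pq qr rs.
  case: ap => ->; case: aq => ->; case: ar => ->; rewrite !eqxx ?orbT;
  move=> /(_ isT isT isT); rewrite s_cnt; lia.
case: i ij pi hi => [|i] ij pi hi.
  have := s_size; case: (ltngtP j.+1 (size s)) => [jl _|jg _|je ss]; [|lia|].
    have := s_nthV jl; have := s_mono (leqnSn j) jl; rewrite hj => h1 h2.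
    have e : nth 0 s j.+1 = n by lia.
    by apply: (ok 0 j j.+1) => //; auto.
  move: pj pi; rewrite (_ : j = (2 * t).-1); last by lia.
  case: t ss => [|t'] ss; first lia.
  have -> : (2 * t'.+1).-1 = (2*t').+1 by lia.
  by rewrite oddS oddM /= => <-.
have l1 : i < size s by lia.
have := s_nthV l1; have := s_mono (leqnSn i) (ltn_trans ij js); rewrite hi => h1 h2.
have e : nth 0 s i = 1 by lia.
by apply: (ok i i.+1 j) => //; auto.
Qed.

Definition pos (b : bool) (l : seq nat) :=
  [seq nth 0 l k | k <- iota 0 (size l) & odd k == b].

Lemma pos_indep b : indep_cycle n (pos b s).
Proof.
have memP : forall x, x \in pos b s -> exists2 k, k < size s /\ odd k = b & x = nth 0 s k.
  move=> x /mapP [k]; rewrite mem_filter mem_iota => /andP [/eqP pk /andP [_ ks]] ->.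
  by exists k.
apply/and3P; split.
- rewrite map_inj_in_uniq ?filter_uniq ?iota_uniq //.
  move=> i j; rewrite !mem_filter !mem_iota => /andP [/eqP pi /andP [_ il]]
    /andP [/eqP pj /andP [_ js]] e.
  case: (ltngtP i j) => // c.
    have := gap2 c (etrans pi (esym pj)); lia.
  have := gap2 c (etrans pj (esym pi)); lia.
- apply/allP => x /memP [k [ks _] ->]; exact: s_nthV.
- apply/allP => x /memP [i [il pi] ->]; apply/allP => y /memP [j [js pj] ->].
  have vi := s_nthV il; have vj := s_nthV js.
  rewrite /cycle_edge vi vj /=.
  case: (ltngtP i j) => c.
  + have := gap2 c (etrans pi (esym pj)) js => g.
    apply/negP => /or4P [] /=; try lia.
    move=> /andP [/eqP h1 /eqP h2]; exact: (wrap c pi pj js h1 h2).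
  + have := gap2 c (etrans pj (esym pi)) il => g.
    apply/negP => /or4P [] /=; try lia.
    move=> /andP [/eqP h1 /eqP h2]; exact: (wrap c pj pi il h2 h1).
  + subst j; apply/negP => /or4P [] /=; lia.
Qed.

End Main.

Theorem proposition1p11 (n t : nat) :
  3 <= n -> 0 < t -> t_sortable (indep_cycle n) t.
Proof.
move=> n3 t0 F G iF iG sF sG; rewrite /sort_pair /=.
have e1 : forall l, odd_pos l = pos false l.
  by move=> l; rewrite /odd_pos /pos; congr map; apply: eq_filter => k; case: (odd k).
have e2 : forall l, even_pos l = pos true l.
  by move=> l; rewrite /even_pos /pos; congr map; apply: eq_filter => k; case: (odd k).
by rewrite e1 e2; split; apply: (pos_indep (t := t)).
Qed.
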